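(* Let $n\in\mathbb N$ and $X=C_2\sqcup L_n$, and let $a$ be the generator of the subgroup $C_2$ of $X$ (identified with $\langle a\rangle$). Then $\lambda(X)$ is a finite commutative Boolean semigroup, its set of idempotents $E(\lambda(X))$ equals $\lambda(X)\setminus\{a\}$, and $\mathcal E*a=a$ for every idempotent $\mathcal E$ of $\lambda(X)$.
   Context: $\lambda(X)$ is the set of maximal linked upfamilies on $X$ (an upfamily is a family of nonempty subsets closed under supersets; linked means any two members intersect; maximal linked means not properly contained in another linked upfamily), with each $x\in X$ identified with $\langle x\rangle=\{A\subset X:x\in A\}$ and operation $\mathcal A*\mathcal B=\big\langle \bigcup_{a\in A} a*B_a : A\in\mathcal A,\ \{B_a\}_{a\in A}\subset\mathcal B\big\rangle$, where $\langle\mathcal C\rangle=\{A\subset X:\exists C\in\mathcal C,\ C\subset A\}$. $C_2=\{1,-1\}$ under multiplication; $L_n=\{0,\dots,n-1\}$ with operation $\min$. For semigroups $(X,* )$, $(Y,\star)$, the disjoint ordered union $X\sqcup Y$ is the disjoint union with operation $x\circ y=x*y$ for $x,y\in X$; $x\circ y=x$ if $x\in X,y\in Y$; $x\circ y=y$ if $x\in Y,y\in X$; $x\circ y=x\star y$ for $x,y\in Y$. A semigroup is Boolean if $x^3=x$ for all $x$. *)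

(* Defs.v *)
From HB Require Import structures.
From mathcomp Require Import all_boot.
Set Implicit Arguments. Unset Strict Implicit. Unset Printing Implicit Defensive.

Section Upfamilies.
Variables (T : finType) (op : T -> T -> T).

Definition upfam (F : {set {set T}}) : bool :=
  (set0 \notin F) &&
  [forall A : {set T}, forall B : {set T}, (A \in F) && (A \subset B) ==> (B \in F)].

Definition linked (F : {set {set T}}) : bool :=
  [forall A in F, forall B in F, A :&: B != set0].

Definition mlu (F : {set {set T}}) : bool :=
  [&& upfam F, linked F &
   [forall G : {set {set T}}, [&& upfam G, linked G & F \subset G] ==> (G == F)]].

Definition pfam (x : T) : {set {set T}} := [set A : {set T} | x \in A].

Definition upcl (C : {set {set T}}) : {set {set T}} :=
  [set A : {set T} | [exists C0 in C, C0 \subset A]].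

Definition lmulset (a : T) (B : {set T}) : {set T} := [set op a b | b in B].

Definition fmul (FA FB : {set {set T}}) : {set {set T}} :=
  upcl [set C : {set T} | [exists A in FA, exists f : {ffun T -> {set T}},
          [forall a in A, f a \in FB] && (C == \bigcup_(a in A) lmulset a (f a))]].

End Upfamilies.

(* X = C_2 \sqcup L_n.  C_2 = {1,-1} is encoded as inl b with b = true for -1
   (multiplication = xor); L_n = 'I_n with min. *)
Definition Xn (n : nat) : finType := (bool + 'I_n)%type.

Definition Xop (n : nat) (x y : Xn n) : Xn n :=
  match x, y with
  | inl b, inl c => inl (b (+) c)
  | inl b, inr _ => inl b
  | inr _, inl c => inl c
  | inr i, inr j => inr (if (i <= j)%N then i else j)
  end.

Definition Xa (n : nat) : Xn n := inl true.

Definition lam (n : nat) := [pred F : {set {set Xn n}} | mlu F].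
Definition lmul (n : nat) := @fmul (Xn n) (@Xop n).

(* Main.v *)
Require Import Defs.
From mathcomp Require Import all_boot.
From mathcomp Require Import zify.
Set Implicit Arguments. Unset Strict Implicit. Unset Printing Implicit Defensive.

Section Gen.
Variables (T : finType) (op : T -> T -> T) (t0 : T).

Definition pre (x : T) (C : {set T}) : {set T} := [set y | op x y \in C].
Definition upward (F : {set {set T}}) :=
  forall A B : {set T}, A \in F -> A \subset B -> B \in F.

Lemma upfam_up (F : {set {set T}}) : upfam F -> upward F.
Proof.
case/andP=> _ /forallP h A B hA hAB.
by have /forallP/(_ B)/implyP := h A; apply; rewrite hA hAB.
Qed.

Lemma linked_meet (F : {set {set T}}) (A B : {set T}) : linked F -> A \in F -> B \in F -> A :&: B != set0.
Proof.
by move/forallP/(_ A)/implyP=> h /h /forallP/(_ B)/implyP.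
Qed.

Lemma linked_ne (F : {set {set T}}) (A : {set T}) : linked F -> A \in F -> A != set0.
Proof. by move=> hl hA; have := linked_meet hl hA hA; rewrite setIid. Qed.

Lemma mlu_upfam (F : {set {set T}}) : mlu F -> upfam F. Proof. by case/and3P. Qed.
Lemma mlu_linked (F : {set {set T}}) : mlu F -> linked F. Proof. by case/and3P. Qed.
Lemma mlu_up (F : {set {set T}}) : mlu F -> upward F. Proof. by move/mlu_upfam/upfam_up. Qed.

Lemma mlu_max (F : {set {set T}}) (G : {set {set T}}) : mlu F -> upfam G -> linked G -> F \subset G -> G = F.
Proof.
case/and3P=> _ _ /forallP/(_ G)/implyP h uG lG sFG.
by apply/eqP/h; rewrite uG lG sFG.
Qed.

Lemma mlu_sub (F : {set {set T}}) (G : {set {set T}}) : mlu F -> mlu G -> F \subset G -> F = G.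
Proof.
move=> hF hG s; symmetry; apply: mlu_max => //; [exact: mlu_upfam | exact: mlu_linked].
Qed.

Lemma upfam_intro (F : {set {set T}}) : set0 \notin F -> upward F -> upfam F.
Proof.
move=> h0 hu; rewrite /upfam h0 /=; apply/forallP=> A; apply/forallP=> B.
by apply/implyP=> /andP[hA hAB]; exact: hu hA hAB.
Qed.

Lemma linked_intro (F : {set {set T}}) : (forall A B : {set T}, A \in F -> B \in F -> A :&: B != set0) -> linked F.
Proof.
move=> h; apply/forallP=> A; apply/implyP=> hA; apply/forallP=> B; apply/implyP=> hB.
exact: h.
Qed.

Lemma mlu_setT (F : {set {set T}}) : mlu F -> setT \in F.
Proof.
move=> hF.
have ne : (setT : {set T}) != set0 by apply/set0Pn; exists t0.
have lF := mlu_linked hF; have uF := mlu_up hF.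
have E := @mlu_max F (F :|: [set setT]) hF.
rewrite -E ?subsetUl ?inE ?eqxx ?orbT //.
- apply: upfam_intro.
  + rewrite !inE negb_or eq_sym ne andbT.
    by apply/negP=> h; have := linked_ne lF h; rewrite eqxx.
  + move=> A B; rewrite !inE => /orP[hA|/eqP->] hAB; first by rewrite (uF _ _ hA hAB).
    by rewrite eqEsubset hAB subsetT orbT.
- apply: linked_intro=> A B; rewrite !inE => /orP[hA|/eqP->] /orP[hB|/eqP->].
  + exact: linked_meet lF hA hB.
  + by rewrite setIT (linked_ne lF hA).
  + by rewrite setTI (linked_ne lF hB).
  + by rewrite setIT.
Qed.

Lemma mlu_compl (F : {set {set T}}) (C : {set T}) : mlu F -> C \notin F -> ~: C \in F.
Proof.
move=> hF hC; apply/negPn/negP=> hCc.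
have lF := mlu_linked hF; have uF := mlu_up hF.
have C0 : C != set0.
  by apply/negP=> /eqP C0; move: hCc; rewrite C0 setC0 mlu_setT.
have mC : forall D, D \in F -> D :&: C != set0.
  move=> D hD; apply/negP; rewrite setI_eq0 disjoints_subset => /(uF _ _ hD).
  by rewrite (negbTE hCc).
have E := @mlu_max F (F :|: [set D : {set T} | C \subset D]) hF.
move: hC; rewrite -E ?subsetUl ?inE ?subxx ?orbT //.
- apply: upfam_intro.
  + rewrite !inE negb_or subset0 C0 andbT.
    by apply/negP=> h; have := linked_ne lF h; rewrite eqxx.
  + move=> A B; rewrite !inE => /orP[hA|hA] hAB; first by rewrite (uF _ _ hA hAB).
    by rewrite (subset_trans hA hAB) orbT.
- apply: linked_intro=> A B; rewrite !inE => /orP[hA|hA] /orP[hB|hB].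
  + exact: linked_meet lF hA hB.
  + apply/set0Pn; case/set0Pn: (mC _ hA) => x; rewrite !inE => /andP[h1 h2].
    by exists x; rewrite !inE h1 (subsetP hB).
  + apply/set0Pn; case/set0Pn: (mC _ hB) => x; rewrite !inE => /andP[h1 h2].
    by exists x; rewrite !inE h1 (subsetP hA).
  + apply/set0Pn; case/set0Pn: C0 => x hx.
    by exists x; rewrite !inE (subsetP hA) ?(subsetP hB).
Qed.

Lemma mlu_complE (F : {set {set T}}) (C : {set T}) : mlu F -> (~: C \in F) = (C \notin F).
Proof.
move=> hF; apply/idP/idP; last exact: mlu_compl.
move=> h; apply/negP=> h'; have := linked_meet (mlu_linked hF) h' h.
by rewrite setICr eqxx.
Qed.

Lemma mlu_intro (F : {set {set T}}) : upfam F -> linked F ->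
  (forall C, C \in F \/ ~: C \in F) -> mlu F.
Proof.
move=> uF lF hc; rewrite /mlu uF lF /=; apply/forallP=> G.
apply/implyP=> /and3P[uG lG sFG]; rewrite eqEsubset sFG andbT.
apply/subsetP=> D hD; case: (hc D) => // hc'.
by have := linked_meet lG hD (subsetP sFG _ hc'); rewrite setICr eqxx.
Qed.

Lemma fmulP (F G : {set {set T}}) (C : {set T}) : upward F -> upward G ->
  (C \in fmul op F G) = ([set x | pre x C \in G] \in F).
Proof.
move=> uF uG; rewrite /fmul /upcl inE; apply/existsP/idP.
- case=> C0 /andP[]; rewrite inE.
  case/existsP=> A /andP[AF /existsP[f /andP[/forallP hf /eqP E]]] sub.
  apply: (uF A) => //; apply/subsetP=> a aA; rewrite inE.
  apply: (uG (f a)); first by move: (hf a); rewrite aA.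
  apply/subsetP=> b bf; rewrite inE; apply: (subsetP sub); rewrite E.
  by apply/bigcupP; exists a => //; apply/imsetP; exists b.
- move=> hA; exists (\bigcup_(a in [set x | pre x C \in G]) lmulset op a (pre a C)).
  rewrite inE; apply/andP; split.
  + apply/existsP; exists [set x | pre x C \in G]; rewrite hA /=.
    apply/existsP; exists [ffun a => pre a C]; apply/andP; split.
    * by apply/forallP=> a; apply/implyP; rewrite inE ffunE.
    * by apply/eqP; apply: eq_bigr=> a _; rewrite ffunE.
  + apply/subsetP=> z /bigcupP[a _ /imsetP[b]]; rewrite inE => hb ->; exact: hb.
Qed.

Lemma fmul_up (F G : {set {set T}}) : upward F -> upward G -> upward (fmul op F G).
Proof.
move=> uF uG C D; rewrite !fmulP // => hC hCD; apply: uF hC _.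
apply/subsetP=> x; rewrite !inE => hx; apply: uG hx _.
by apply/subsetP=> y; rewrite !inE => /(subsetP hCD).
Qed.

Lemma fmul_mlu (F G : {set {set T}}) : mlu F -> mlu G -> mlu (fmul op F G).
Proof.
move=> hF hG; have uF := mlu_up hF; have uG := mlu_up hG.
have lF := mlu_linked hF; have lG := mlu_linked hG.
apply: mlu_intro.
- apply: upfam_intro; last exact: fmul_up.
  rewrite fmulP //; apply/negP=> h; have := linked_ne lF h.
  apply/negP; rewrite negbK; apply/eqP/setP=> x; rewrite !inE.
  apply/negP=> h'; have := linked_ne lG h'; apply/negP; rewrite negbK.
  by apply/eqP/setP=> y; rewrite !inE.
- apply: linked_intro=> C D; rewrite !fmulP // => hC hD.
  case/set0Pn: (linked_meet lF hC hD) => x; rewrite !inE => /andP[h1 h2].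
  case/set0Pn: (linked_meet lG h1 h2) => y; rewrite !inE => /andP[k1 k2].
  by apply/set0Pn; exists (op x y); rewrite !inE k1 k2.
- move=> C; rewrite !fmulP //.
  have -> : [set x | pre x (~: C) \in G] = ~: [set x | pre x C \in G].
    apply/setP=> x; rewrite !inE -mlu_complE //; congr (_ \in G).
    by apply/setP=> y; rewrite !inE.
  case: (boolP ([set x | pre x C \in G] \in F)) => h; [left|right] => //.
  exact: mlu_compl.
Qed.

Hypothesis opA : associative op.
Hypothesis opC : commutative op.

Lemma fmulA (F G H : {set {set T}}) : mlu F -> mlu G -> mlu H ->
  fmul op (fmul op F G) H = fmul op F (fmul op G H).
Proof.
move=> hF hG hH; have uF := mlu_up hF; have uG := mlu_up hG; have uH := mlu_up hH.
apply/setP=> C.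
rewrite (fmulP C (fmul_up uF uG) uH) (fmulP C uF (fmul_up uG uH)) (fmulP _ uF uG).
congr (_ \in F); apply/setP=> u.
rewrite [u \in [set x | _ \in fmul op G H]]in_set (fmulP _ uG uH) [LHS]in_set.
congr (_ \in G); apply/setP=> v; rewrite [LHS]in_set [RHS]in_set [LHS]in_set.
congr (_ \in H); apply/setP=> w; by rewrite !inE opA.
Qed.

Lemma pfam_mlu (x : T) : mlu (pfam x).
Proof.
apply: mlu_intro.
- apply: upfam_intro; first by rewrite inE inE.
  by move=> A B; rewrite !inE => hA /subsetP; apply.
- by apply: linked_intro=> A B; rewrite !inE => hA hB; apply/set0Pn; exists x; rewrite inE hA hB.
- by move=> C; rewrite !inE; case: (x \in C); [left|right].
Qed.

Lemma pfam_eq (F : {set {set T}}) (x : T) : mlu F -> [set x] \in F -> F = pfam x.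
Proof.
move=> hF hx; symmetry; apply: mlu_sub => //; first exact: pfam_mlu.
apply/subsetP=> A; rewrite inE => hA; apply: (mlu_up hF) hx _; by rewrite sub1set.
Qed.

Lemma fmul_pfam (x y : T) : fmul op (pfam x) (pfam y) = pfam (op x y).
Proof.
have u := mlu_up (pfam_mlu _).
by apply/setP=> C; rewrite fmulP // !inE.
Qed.

Lemma fmul_pfamC (F : {set {set T}}) (c : T) : mlu F ->
  fmul op F (pfam c) = fmul op (pfam c) F.
Proof.
move=> hF; have u := mlu_up (pfam_mlu c); have uF := mlu_up hF.
apply/setP=> C; rewrite !fmulP // inE inE; congr (_ \in F).
by apply/setP=> y; rewrite !inE opC.
Qed.
End Gen.

Section X.
Variable n : nat.
Local Notation X := (Xn n).
Local Notation op := (@Xop n).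
Definition ee : X := inl false.

Lemma minval (i j : 'I_n) : val (if (i <= j)%N then i else j) = minn i j.
Proof. case: leqP => h /=; lia. Qed.

Lemma XopA : associative op.
Proof.
case=> [b|i] [c|j] [d|k] //=; first by rewrite addbA.
by congr inr; apply: val_inj; rewrite !minval minnA.
Qed.

Lemma XopC : commutative op.
Proof.
case=> [b|i] [c|j] //=; first by rewrite addbC.
by congr inr; apply: val_inj; rewrite !minval minnC.
Qed.

Definition pp (C : {set X}) (k : nat) := [exists z : 'I_n, (val z == k) && (inr z \in C)].
Lemma ppE (C : {set X}) (z : 'I_n) : pp C (val z) = (inr z \in C).
Proof.
apply/existsP/idP => [[w /andP[/eqP/val_inj -> ]]|h] //.
by exists z; rewrite eqxx h.
Qed.

Lemma chain4 (p : pred nat) i i' j j' : p (minn i j) -> ~~ p (minn i' j) ->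
  p (minn i' j') -> ~~ p (minn i j') -> False.
Proof.
wlog hii : i i' j j' / i <= i'.
  move=> H h1 h2 h3 h4; case: (leqP i i') => h; first exact: H h1 h2 h3 h4.
  exact: (H i' i j' j (ltnW h) h3 h4 h1 h2).
move=> h1 h2 h3 h4; case: (leqP j i) => hji.
  have E : minn i' j = minn i j by lia.
  by rewrite E h1 in h2.
case: (leqP i j') => hij'.
  have E : minn i j' = minn i j by lia.
  by rewrite E h1 in h4.
have E : minn i' j' = minn i j' by lia.
by move: h3; rewrite E => h3; rewrite h3 in h4.
Qed.

Definition bad (C : {set X}) (x : X) := (x == Xa n) && (ee \in C) && (Xa n \notin C).

Lemma pointwise (C : {set X}) (x x' y y' : X) :
  (Xa n \in C) ==> (ee \in C) -> ~~ bad C x -> ~~ bad C x' ->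
  op x y \in C -> op x' y \notin C -> op x' y' \in C -> op x y' \notin C -> False.
Proof.
rewrite /bad /ee /Xa.
case: x => [b|i]; case: x' => [b'|i']; case: y => [c|j]; case: y' => [c'|j'] /=.
all: try case: b; try case: b'; try case: c; try case: c'.
all: case: ((inl true : X) \in C); case: ((inl false : X) \in C) => //=.
all: move=> _ _ _; rewrite -!ppE !minval.
all: exact: (@chain4 (pp C)).
Qed.

Local Notation mluc := (mlu_compl ee).
Local Notation fmlu := (fmul_mlu op ee).

Lemma pre_bad (C : {set X}) : ee \in C -> Xa n \notin C -> pre op (Xa n) C = [set Xa n].
Proof.
move=> he ha; apply/setP=> y; rewrite !inE; rewrite /Xa in ha *.
by case: y => [[|]|j] //=; rewrite (negbTE ha).
Qed.

Lemma compar (G : {set {set X}}) (C : {set X}) (x x' : X) :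
  [set Xa n] \notin G -> (Xa n \in C) ==> (ee \in C) ->
  pre op x C \in G -> pre op x' C \in G ->
  pre op x C \subset pre op x' C \/ pre op x' C \subset pre op x C.
Proof.
move=> haG good hx hx'.
have nb : forall z, pre op z C \in G -> ~~ bad C z.
  move=> z hz; apply/negP=> /andP[/andP[/eqP E he] ha].
  by move: hz; rewrite E pre_bad // (negbTE haG).
case: (boolP (pre op x C \subset pre op x' C)) => h1; [by left|right].
case/subsetPn: h1 => y; rewrite !inE => hy1 hy2.
apply/subsetP=> y'; rewrite !inE => hy3; apply/negPn/negP=> hy4.
exact: (pointwise good (nb _ hx) (nb _ hx') hy1 hy2 hy3 hy4).
Qed.

Lemma comm_imp (F G : {set {set X}}) (C : {set X}) : mlu F -> mlu G ->
  [set Xa n] \notin G -> (Xa n \in C) ==> (ee \in C) ->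
  C \in fmul op F G -> C \in fmul op G F.
Proof.
move=> hF hG haG good; have uF := mlu_up hF; have uG := mlu_up hG.
rewrite !fmulP //.
set A := [set x | pre op x C \in G] => hA.
apply/negPn/negP=> hB; have hBc := mluc hG hB.
have /set0Pn[x1 hx1] := linked_ne (mlu_linked hF) hA.
case: (arg_minnP (fun x => #|pre op x C|) hx1) => x0 hx0 hmin.
have hx0G : pre op x0 C \in G by have : x0 \in A := hx0; rewrite inE.
have := linked_meet (mlu_linked hG) hx0G hBc; apply/negP; rewrite negbK.
apply/eqP/setP=> y; rewrite inE [y \in set0]inE; apply/negP=> /andP[hy1 hy2].
move: hy2; rewrite inE inE => hy2.
have hc := mluc hF hy2.
have /set0Pn[x hx] := linked_meet (mlu_linked hF) hA hc.
move: hx; rewrite inE => /andP[hxA]; rewrite inE inE XopC => hxy.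
have hxG : pre op x C \in G by move: hxA; rewrite inE.
have hy1' := hy1.
case: (compar haG good hx0G hxG) => hs.
  by move: (subsetP hs y hy1); rewrite inE (negbTE hxy).
have E : pre op x C = pre op x0 C by apply/eqP; rewrite eqEcard hs hmin.
by move: hy1; rewrite -E inE (negbTE hxy).
Qed.

Lemma lmulC (F G : {set {set X}}) : mlu F -> mlu G -> fmul op F G = fmul op G F.
Proof.
move=> hF hG.
case: (boolP ([set Xa n] \in F)) => haF.
  by rewrite (pfam_eq hF haF) (fmul_pfamC XopC).
case: (boolP ([set Xa n] \in G)) => haG.
  by rewrite (pfam_eq hG haG) (fmul_pfamC XopC).
apply: mlu_sub; [exact: fmlu | exact: fmlu |].
apply/subsetP=> C hC.
case: (boolP ((Xa n \in C) ==> (ee \in C))) => good; first exact: comm_imp.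
apply/negPn/negP=> h; have hc := mluc (fmlu hG hF) h.
have good' : (Xa n \in ~: C) ==> (ee \in ~: C).
  by move: good; rewrite !inE; case: (Xa n \in C); case: (ee \in C).
have := comm_imp hG hF haF good' hc.
move=> hc'; have := linked_meet (mlu_linked (fmlu hF hG)) hC hc'.
by rewrite setICr eqxx.
Qed.

Lemma idem (F : {set {set X}}) : mlu F -> [set Xa n] \notin F -> fmul op F F = F.
Proof.
move=> hF haF; have uF := mlu_up hF.
have hT := mluc hF haF.
symmetry; apply: mlu_sub => //; first exact: fmlu.
apply/subsetP=> C hC; rewrite fmulP //; apply: (uF _ _ hC).
apply/subsetP=> x hx; rewrite inE.
case: x hx => [[|]|i] hx.
- apply: (uF _ _ hT); apply/subsetP=> y; rewrite !inE.
  by case: y => [[|]|j] //=.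
- apply: (uF _ _ hC); apply/subsetP=> y; rewrite !inE.
  by case: y => [c|j] //=.
- apply: (uF _ _ hC); apply/subsetP=> y; rewrite !inE.
  case: y => [c|j] //= hy.
  by case: leqP.
Qed.

Lemma Ea (F : {set {set X}}) : mlu F -> [set Xa n] \notin F ->
  fmul op F (pfam (Xa n)) = pfam (Xa n).
Proof.
move=> hF haF; have uF := mlu_up hF; have ua := mlu_up (pfam_mlu (Xa n)).
have hT := mluc hF haF.
symmetry; apply: mlu_sub; [exact: pfam_mlu | exact: fmlu (pfam_mlu _) |].
apply/subsetP=> C; rewrite inE => hC; rewrite fmulP //; apply: (uF _ _ hT).
apply/subsetP=> x; rewrite !inE.
by case: x => [[|]|i] //=.
Qed.

Lemma pfam_ne : pfam ee != pfam (Xa n).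
Proof.
apply/negP=> /eqP E.
have : [set ee] \in pfam ee by rewrite inE set11.
by rewrite E inE inE.
Qed.
End X.

Theorem proposition4p3 (n : nat) :
  (* <a> is an element of lambda(X) *)
  pfam (Xa n) \in lam n /\
  (* lambda(X) is closed under * *)
  (forall F G, F \in lam n -> G \in lam n -> lmul F G \in lam n) /\
  (* associativity *)
  (forall F G H, F \in lam n -> G \in lam n -> H \in lam n ->
     lmul (lmul F G) H = lmul F (lmul G H)) /\
  (* commutativity *)
  (forall F G, F \in lam n -> G \in lam n -> lmul F G = lmul G F) /\
  (* Boolean: F^3 = F *)
  (forall F, F \in lam n -> lmul (lmul F F) F = F) /\
  (* E(lambda(X)) = lambda(X) \ {<a>} *)
  (forall F, F \in lam n -> (lmul F F = F <-> F <> pfam (Xa n))) /\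
  (* E * a = a for every idempotent E *)
  (forall E, E \in lam n -> lmul E E = E -> lmul E (pfam (Xa n)) = pfam (Xa n)).
Proof.
rewrite /lmul.
have lamE : forall F, (F \in lam n) = mlu F by [].
have notA : forall F, mlu F -> F <> pfam (Xa n) -> [set Xa n] \notin F.
  by move=> F hF hne; apply/negP=> h; apply: hne; exact: pfam_eq.
split; first by rewrite lamE; exact: pfam_mlu.
split; first by move=> F G; rewrite !lamE; exact: (fmul_mlu _ (ee n)).
split. move=> F G H; rewrite !lamE => hF hG hH; exact: (fmulA (@XopA n) hF hG hH).
split; first by move=> F G; rewrite !lamE; exact: lmulC.
split.
  move=> F; rewrite lamE => hF.
  case: (boolP ([set Xa n] \in F)) => h.
    by rewrite (pfam_eq hF h) !fmul_pfam.
  by rewrite !idem.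
split.
  move=> F; rewrite lamE => hF; split.
    move=> hid hFa; move: hid; rewrite hFa fmul_pfam /= => E.
    by move: (pfam_ne n); rewrite -E eqxx.
  by move=> hne; apply: idem => //; exact: notA.
move=> E; rewrite lamE => hE hid; apply: Ea => //; apply: notA => // hEa.
by move: hid; rewrite hEa fmul_pfam /= => E'; move: (pfam_ne n); rewrite -E' eqxx.
Qed.
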